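(* Let $n\geq 1$. Then $H_n(x)=\sum_{i=0}^{n}e(i,n)x^i$, where, with $C(a,b)=\binom{a}{b}$, $$e(i,n)=\begin{cases}3^{i}, & 0\leq i\leq n-\lfloor n/2\rfloor-1,\\[4pt] \dfrac{2^{n}C(i,n-i)}{2^{i+1}}+3^{i}\left(1+2^{n}\displaystyle\sum_{j=n-\lfloor n/2\rfloor}^{i}\frac{2n-5j}{j\,6^{j}}C(j,n-j)\right), & n-\lfloor n/2\rfloor\leq i\leq n-1,\\[4pt] 1, & i=n.\end{cases}$$
   Context: The Stern polynomials $B_n(t)\in\mathbb{Z}[t]$ are defined by $B_0(t)=0$, $B_1(t)=1$, and for $n\geq 1$: $B_{2n}(t)=tB_n(t)$, $B_{2n+1}(t)=B_n(t)+B_{n+1}(t)$. For $n\geq1$ let $e(n)=\deg B_n(t)$. For $n\geq 0$ let $H_n(x)=\sum_{m=1}^{2^n}x^{e(m)}$ and for $i,n\geq0$ let $e(i,n)=|\{m\in[1,2^n]\cap\mathbb{Z}:\;e(m)=i\}|$. *)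

(* Defs.v *)
From HB Require Import structures.
From mathcomp Require Import all_boot all_order all_algebra.
Set Implicit Arguments. Unset Strict Implicit. Unset Printing Implicit Defensive.
Import Order.TTheory GRing.Theory Num.Theory.
Local Open Scope ring_scope.

(* Stern polynomials B_n(t) in Z[t], computed with fuel k (k >= n suffices):
   B_0 = 0, B_1 = 1, B_{2m} = t B_m, B_{2m+1} = B_m + B_{m+1}. *)
Fixpoint stern_fuel (k n : nat) : {poly int} :=
  match k with
  | 0%N => 0
  | k'.+1 =>
    if n == 0%N then 0
    else if n == 1%N then 1
    else if odd n then stern_fuel k' n./2 + stern_fuel k' n./2.+1
    else 'X * stern_fuel k' n./2
  end.

Definition stern (n : nat) : {poly int} := stern_fuel n n.

Definition sdeg (m : nat) : nat := (size (stern m)).-1.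

Definition H (n : nat) : {poly int} := \sum_(1 <= m < (2 ^ n).+1) 'X^(sdeg m).

Definition ecount (i n : nat) : nat := count (fun m => sdeg m == i) (iota 1 (2 ^ n)).

Lemma stern_0 : stern 0 = 0. Proof. by []. Qed.
Lemma stern_1 : stern 1 = 1. Proof. by []. Qed.

(* Main.v *)
Require Import Defs.
From HB Require Import structures.
From mathcomp Require Import all_boot all_order all_algebra.
From mathcomp Require Import zify ring lra.
Import Order.TTheory GRing.Theory Num.Theory.
Local Open Scope ring_scope.



Lemma sfS k n : stern_fuel k.+1 n = if n == 0%N then 0 else if n == 1%N then 1
    else if odd n then stern_fuel k n./2 + stern_fuel k n./2.+1
    else 'X * stern_fuel k n./2.
Proof. by []. Qed.

Lemma stern_fuelS k n : (n <= k)%N -> stern_fuel k.+1 n = stern_fuel k n.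
Proof.
elim: k n => [|k IH] n hn.
  by move: hn; rewrite leqn0 => /eqP ->.
rewrite sfS [RHS]sfS.
case: eqP => // n0; case: eqP => // n1.
case: ifP => on.
  rewrite !IH //.
  - have := odd_double_half n; rewrite on /=; lia.
  - have := odd_double_half n; rewrite on /=; lia.
rewrite IH //; have := odd_double_half n; rewrite on /=; lia.
Qed.

Lemma stern_fuelE k n : (n <= k)%N -> stern_fuel k n = stern n.
Proof.
move=> hk; rewrite /stern; elim: k hk => [|k IH]; first by rewrite leqn0 => /eqP ->.
rewrite leq_eqVlt => /orP [/eqP -> //| hlt].
by rewrite stern_fuelS // IH.
Qed.

Lemma stern_even m : (1 <= m)%N -> stern (m.*2) = 'X * stern m.
Proof.
move=> hm; rewrite {1}/stern.
have -> : m.*2 = (m.*2.-1).+1 by lia.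
rewrite sfS; have -> : (m.*2.-1.+1 == 0%N) = false by lia.
have -> : (m.*2.-1.+1 == 1%N) = false by lia.
have -> : m.*2.-1.+1 = m.*2 by lia.
have -> : odd m.*2 = false by apply: odd_double. by rewrite doubleK stern_fuelE //; lia.
Qed.

Lemma stern_odd m : (1 <= m)%N -> stern (m.*2.+1) = stern m + stern m.+1.
Proof.
move=> hm; rewrite {1}/stern sfS.
have -> : (m.*2.+1 == 1%N) = false by lia.
have -> : odd m.*2.+1 = true by rewrite /= odd_double.
have -> : (m.*2.+1)./2 = m by rewrite /= uphalf_double.
rewrite !stern_fuelE //; lia.
Qed.



Definition nonneg (p : {poly int}) := forall i, 0 <= p`_i.

Lemma size_add_nn (p q : {poly int}) : nonneg p -> nonneg q ->
  size (p + q) = maxn (size p) (size q).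
Proof.
move=> hp hq; apply/eqP; rewrite eqn_leq size_polyD /= geq_max.
have key : forall p q : {poly int}, nonneg p -> nonneg q -> (size p <= size (p + q)%R)%N.
  move=> {hp hq} r s hr hs.
  have [->|r0] := eqVneq r 0; first by rewrite size_poly0.
  have sr : (0 < size r)%N by rewrite size_poly_gt0.
  rewrite -(prednK sr) ltnNge; apply/negP => /leq_sizeP h.
  have := h _ (leqnn _); rewrite coefD; apply/eqP.
  have lp : 0 < lead_coef r.
    by rewrite lt_def lead_coef_eq0 r0 /= /lead_coef hr.
  by rewrite gt_eqF // (lt_le_trans lp) // lerDl hs.
by rewrite key // addrC key.
Qed.

Lemma nonneg_stern m : nonneg (stern m) /\ (stern m != 0) = (0 < m)%N.
Proof.
elim: m {-2}m (leqnn m) => [|N IH] m hm.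
  by move: hm; rewrite leqn0 => /eqP ->; rewrite stern_0 eqxx; split => // i; rewrite coef0.
case: m hm => [|m] hm; first by rewrite stern_0 eqxx; split => // i; rewrite coef0.
have [|m1] := eqVneq m 0%N.
  by move=> ->; rewrite stern_1 oner_eq0; split => // i; rewrite coefC; case: (i == 0%N).
have e := odd_double_half m.+1.
rewrite -e; move: e.
case: (odd m.+1) => /= e.
  have hh : (0 < (m.+1)./2)%N by lia.
  rewrite stern_odd //.
  have [a1 a2] := IH (m.+1)./2 ltac:(lia).
  have [b1 b2] := IH (m.+1)./2.+1 ltac:(lia).
  split; first by move=> i; rewrite coefD addr_ge0.
  by rewrite -size_poly_eq0 size_add_nn // -lt0n leq_max !lt0n !size_poly_eq0 a2 b2 hh.
have hh : (0 < (m.+1)./2)%N by lia.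
rewrite add0n stern_even //.
have [a1 a2] := IH (m.+1)./2 ltac:(lia).
split; first by move=> i; rewrite coefXM; case: (i == 0%N).
by rewrite mulf_eq0 polyX_eq0 /= a2 hh double_gt0.
Qed.



Lemma sdeg1 : sdeg 1 = 0%N.
Proof. by rewrite /sdeg stern_1 size_poly1. Qed.

Lemma stern_size m : (0 < m)%N -> (0 < size (stern m))%N.
Proof. by move=> hm; rewrite size_poly_gt0 (nonneg_stern m).2. Qed.

Lemma sdeg_even m : (0 < m)%N -> sdeg m.*2 = (sdeg m).+1.
Proof.
move=> hm; rewrite /sdeg stern_even // mulrC size_mulX ?(nonneg_stern m).2 //=.
by rewrite prednK // stern_size.
Qed.

Lemma sdeg_odd m : (0 < m)%N -> sdeg m.*2.+1 = maxn (sdeg m) (sdeg m.+1).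
Proof.
move=> hm; rewrite /sdeg stern_odd // (size_add_nn _ _ (nonneg_stern m).1 (nonneg_stern m.+1).1).
have := stern_size _ hm; have := stern_size _ (ltn0Sn m); lia.
Qed.

Lemma sdeg_diff m : (0 < m)%N -> (sdeg m.+1 <= (sdeg m).+1)%N /\ (sdeg m <= (sdeg m.+1).+1)%N.
Proof.
elim: m {-2}m (leqnn m) => [|N IH] m hm h0; first by lia.
have [->|m1] := eqVneq m 1%N.
  by rewrite (_ : 2 = 1.*2)%N // sdeg_even // sdeg1.
have e := odd_double_half m.
have h1 : (0 < m./2)%N by lia.
have [a1 a2] := IH m./2 ltac:(lia) h1.
move: e; case: (odd m) => /= e.
  rewrite -e /= add1n sdeg_odd // (_ : m./2.*2.+2 = (m./2.+1).*2)%N; last by lia.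
  rewrite sdeg_even //; lia.
rewrite -e /= add0n sdeg_odd // sdeg_even //; lia.
Qed.

Lemma sdeg4_1 k : (0 < k)%N -> sdeg (4 * k + 1) = (sdeg k).+1.
Proof.
move=> hk; rewrite (_ : 4 * k + 1 = (k.*2).*2.+1)%N; last by lia.
rewrite sdeg_odd ?double_gt0 // sdeg_even // sdeg_odd //.
have := sdeg_diff _ hk; lia.
Qed.

Lemma sdeg4_3 k : sdeg (4 * k + 3) = (sdeg k.+1).+1.
Proof.
case: k => [|k].
  rewrite (_ : 4 * 0 + 3 = 1.*2.+1)%N // sdeg_odd // (_ : 2 = 1.*2)%N // sdeg_even //.
  by rewrite sdeg1.
rewrite (_ : 4 * k.+1 + 3 = (k.+1.*2.+1).*2.+1)%N; last by lia.
rewrite sdeg_odd // (_ : (k.+1.*2.+2) = k.+2.*2)%N; last by lia.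
rewrite sdeg_even // sdeg_odd //.
have := sdeg_diff _ (ltn0Sn k); lia.
Qed.

Lemma sdeg4_2 k : sdeg (4 * k + 2) = (sdeg (2 * k + 1)).+1.
Proof. by rewrite (_ : 4 * k + 2 = (2 * k + 1).*2)%N ?sdeg_even //; lia. Qed.

Lemma sdeg4_4 k : sdeg (4 * k + 4) = (sdeg (2 * k + 2)).+1.
Proof. by rewrite (_ : 4 * k + 4 = (2 * k + 2).*2)%N ?sdeg_even //; lia. Qed.

Lemma sdeg_pow k : sdeg (2 ^ k) = k.
Proof.
elim: k => [|k IH]; first by rewrite sdeg1.
by rewrite expnS mul2n sdeg_even ?IH // expn_gt0.
Qed.

Lemma sdeg_le n m : (0 < m)%N -> (m <= 2 ^ n)%N -> (sdeg m <= n)%N.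
Proof.
elim: m {-2}m (leqnn m) n => [|N IH] m hm n h0 hn; first by lia.
have [->|m1] := eqVneq m 1%N; first by rewrite sdeg1.
have e := odd_double_half m.
have h1 : (0 < m./2)%N by lia.
case: n hn => [|n] hn; first by move: hn; rewrite expn0; lia.
move: hn; rewrite expnS => hn.
move: e; case: (odd m) => /= e.
  rewrite -e /= add1n sdeg_odd // geq_max.
  have := IH m./2 ltac:(lia) n h1 ltac:(lia).
  have := IH m./2.+1 ltac:(lia) n ltac:(lia) ltac:(lia).
  lia.
rewrite -e /= add0n sdeg_even // ltnS IH //; lia.
Qed.



Definition cs n i := (\sum_(0 <= m < 2 ^ n) (sdeg m.+1 == i))%N.

Lemma count_iota1 (P : pred nat) N : count P (iota 1 N) = (\sum_(0 <= m < N) P m.+1)%N.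
Proof.
elim: N => [|N IH]; first by rewrite big_geq.
have -> : iota 1 N.+1 = iota 1 N ++ [:: N.+1] by rewrite -(addn1 N) iotaD addnC.
by rewrite count_cat IH big_nat_recr //= addn0.
Qed.

Lemma ecountE i n : ecount i n = cs n i.
Proof. by rewrite /ecount count_iota1. Qed.

Lemma split4 (F : nat -> nat) K : (\sum_(0 <= m < 4 * K) F m =
  \sum_(0 <= k < K) (F (4 * k) + F (4 * k + 1) + F (4 * k + 2) + F (4 * k + 3)))%N.
Proof.
elim: K => [|K IH]; first by rewrite !big_geq.
rewrite [in RHS]big_nat_recr // -IH (_ : 4 * K.+1 = (4 * K + 3).+1)%N; last by lia.
rewrite big_nat_recr; last by lia.
rewrite (_ : 4 * K + 3 = (4 * K + 2).+1)%N; last by lia.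
rewrite big_nat_recr; last by lia.
rewrite (_ : 4 * K + 2 = (4 * K + 1).+1)%N; last by lia.
rewrite big_nat_recr; last by lia.
rewrite (_ : 4 * K + 1 = (4 * K).+1)%N; last by lia.
rewrite big_nat_recr; last by lia.
rewrite /=; lia.
Qed.

Lemma split2 (F : nat -> nat) K : (\sum_(0 <= m < 2 * K) F m =
  \sum_(0 <= k < K) (F (2 * k) + F (2 * k + 1)))%N.
Proof.
elim: K => [|K IH]; first by rewrite !big_geq.
rewrite [in RHS]big_nat_recr // -IH (_ : 2 * K.+1 = (2 * K + 1).+1)%N; last by lia.
rewrite big_nat_recr; last by lia.
rewrite (_ : 2 * K + 1 = (2 * K).+1)%N; last by lia.
rewrite big_nat_recr; last by lia.
rewrite /=; lia.
Qed.

Lemma cs_split n i : (2 <= n)%N -> cs n i =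
  (\sum_(0 <= k < 2 ^ (n - 2)) ((sdeg (4 * k + 1) == i) + (sdeg (4 * k + 2) == i)
     + (sdeg (4 * k + 3) == i) + (sdeg (4 * k + 4) == i)))%N.
Proof.
move=> hn; rewrite /cs (_ : 2 ^ n = 4 * 2 ^ (n - 2))%N; last first.
  by rewrite -{1}(subnK hn) expnD mulnC.
rewrite split4; apply: eq_bigr => k _.
by congr (_ + _ + _ + _)%N; congr (sdeg _ == _); lia.
Qed.

Lemma cs_rec n i : (2 <= n)%N ->
  (cs n i.+1 + (i == n - 2) = cs n.-1 i + 2 * cs (n - 2) i)%N.
Proof.
move=> hn; rewrite cs_split //.
under eq_bigr => k _ do rewrite sdeg4_2 sdeg4_3 sdeg4_4 !eqSS.
rewrite !big_split /=.
have e1 : (\sum_(0 <= k < 2 ^ (n - 2)) ((sdeg (2 * k + 1) == i) + (sdeg (2 * k + 2) == i)))%N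
   = cs n.-1 i.
  rewrite /cs (_ : 2 ^ n.-1 = 2 * 2 ^ (n - 2))%N; last first.
    by rewrite -expnS; congr (2 ^ _)%N; lia.
  by rewrite split2; apply: eq_bigr => k _; congr (_ + _)%N; congr (sdeg _ == _); lia.
have e2 : ((\sum_(0 <= k < 2 ^ (n - 2)) (sdeg (4 * k + 1) == i.+1)) + (i == n - 2)
   = cs (n - 2) i)%N.
  rewrite /cs.
  have K0 : (0 < 2 ^ (n - 2))%N by rewrite expn_gt0.
  rewrite -{2}(prednK K0) big_nat_recr //= -{1}(prednK K0) big_nat_recl //=.
  rewrite muln0 add0n sdeg1 add0n prednK // sdeg_pow eq_sym.
  congr (_ + _)%N; apply: eq_bigr => k _.
  by rewrite sdeg4_1 // eqSS.
have e3 : cs (n - 2) i = (\sum_(0 <= k < 2 ^ (n - 2)) (sdeg k.+1 == i))%N by [].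
rewrite big_split /= in e1.
lia.
Qed.

Lemma cs_0 n : (2 <= n)%N -> cs n 0 = 1%N.
Proof.
move=> hn; rewrite cs_split //.
under eq_bigr => k _ do rewrite sdeg4_2 sdeg4_3 sdeg4_4 !addn0.
have K0 : (0 < 2 ^ (n - 2))%N by rewrite expn_gt0.
rewrite -(prednK K0) big_nat_recl //= muln0 add0n sdeg1 big1 // => k _.
by rewrite sdeg4_1.
Qed.



Definition a (n j : nat) : rat := if (j <= n)%N then ((2 ^ (n - j) * 'C(j, n - j))%N)%:R else 0.
Definition a2 (n j : nat) : rat := if (2 <= n)%N then a (n - 2) j else 0.
Definition b (n j : nat) : rat := 8 * a2 n j - 6 * a n j.+1.
Fixpoint Ssum (n i : nat) : rat := if i is i'.+1 then 3 * Ssum n i' + b n i' else 0.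
Definition Fh (n i : nat) : rat := a n i + 2 * 3 ^+ i + Ssum n i.

Lemma a_rec n i : (2 <= n)%N -> a n i.+1 = a n.-1 i + 2 * a (n - 2) i.
Proof.
move=> hn; rewrite /a.
case: (ltngtP i.+1 n) => h.
- have [k ->] : exists k, n = (i + k + 2)%N by exists (n - i - 2)%N; lia.
  rewrite !ifT; try lia.
  have -> : (i + k + 2 - i.+1 = k.+1)%N by lia.
  have -> : ((i + k + 2).-1 - i = k.+1)%N by lia.
  have -> : (i + k + 2 - 2 - i = k)%N by lia.
  rewrite binS expnS !natrM natrD; ring.
- rewrite (_ : (i <= n.-1)%N = false); last lia.
  rewrite (_ : (i <= n - 2)%N = false); last lia.
  ring.
- subst n; rewrite (_ : (i <= i.+1.-1)%N = true); last lia.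
  rewrite (_ : (i <= i.+1 - 2)%N = false); last lia.
  have -> : (i.+1 - i.+1 = 0)%N by lia.
  have -> : (i.+1.-1 - i = 0)%N by lia.
  by rewrite !bin0 mulr0 addr0.
Qed.

Lemma a_gt n j : (n < j)%N -> a n j = 0.
Proof. by move=> h; rewrite /a ifF //; lia. Qed.

Lemma a_nn n : a n n = 1.
Proof. by rewrite /a leqnn subnn bin0. Qed.

Lemma a2_rec n i : (2 <= n)%N -> a2 n i.+1 = a2 n.-1 i + 2 * a2 (n - 2) i.
Proof.
move=> hn; rewrite /a2.
case: n hn => [|[|[|[|n]]]] hn //.
- by rewrite /= /a; case: i => [|i] /=; rewrite mulr0 addr0.
- rewrite /= (_ : (n.+4 - 2 = n.+2)%N); last lia.
  rewrite (_ : (n.+3 - 2 = n.+1)%N); last lia.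
  rewrite (_ : (n.+2 - 2 = n)%N); last lia.
  rewrite a_rec //; congr (_ + _ * a _ _); lia.
Qed.

Lemma b_rec n i : (2 <= n)%N -> b n i.+1 = b n.-1 i + 2 * b (n - 2) i.
Proof. by move=> hn; rewrite /b a2_rec // (a_rec n i.+1 hn); ring. Qed.

Lemma b0 n : (3 <= n)%N -> b n 0 = 0.
Proof.
move=> hn; rewrite /b /a2 ifT; last lia.
rewrite /a !ifT; try lia.
rewrite !bin_small; try lia.
by rewrite !muln0; ring.
Qed.

Lemma SS n i : Ssum n i.+1 = 3 * Ssum n i + b n i.
Proof. by []. Qed.

Lemma S_rec n i : (3 <= n)%N -> Ssum n i.+1 = Ssum n.-1 i + 2 * Ssum (n - 2) i.
Proof.
move=> hn; elim: i => [|i IH]; first by rewrite /= b0 //; ring.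
rewrite (SS n i.+1) IH (SS n.-1 i) (SS (n - 2) i) b_rec; last lia.
ring.
Qed.

Lemma Fh_rec n i : (3 <= n)%N -> Fh n i.+1 = Fh n.-1 i + 2 * Fh (n - 2) i.
Proof.
move=> hn; rewrite /Fh a_rec; last lia.
rewrite S_rec // exprS; ring.
Qed.

Lemma Fh0 n : (1 <= n)%N -> Fh n 0 = 2.
Proof.
move=> hn; rewrite /Fh /= /a /= bin_small ?subn0 //.
by rewrite muln0 expr0; ring.
Qed.

Lemma b_ge n j : (n <= j)%N -> b n j = 0.
Proof.
move=> h; rewrite /b a_gt; last lia.
rewrite /a2; case: ifP => h2; last by rewrite mulr0 subrr.
by rewrite a_gt; [rewrite mulr0 subrr | lia].
Qed.

Lemma S_ge n k : Ssum n (n + k) = 3 ^+ k * Ssum n n.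
Proof.
elim: k => [|k IH]; first by rewrite addn0 expr0 mul1r.
by rewrite addnS SS IH b_ge ?leq_addr // exprS; ring.
Qed.

Lemma Fh_zero n : Fh n n = 1 -> forall k, Fh n (n + k.+1) = 0.
Proof.
rewrite /Fh a_nn => h k.
rewrite a_gt; last lia.
rewrite S_ge exprD exprS.
have -> : Ssum n n = - 2 * 3 ^+ n by move: h; lra.
ring.
Qed.



Lemma sdeg2 : sdeg 2 = 1%N.
Proof. by rewrite (_ : 2 = 1.*2)%N // sdeg_even // sdeg1. Qed.
Lemma sdeg3 : sdeg 3 = 1%N.
Proof. by have := sdeg4_3 0; rewrite sdeg1. Qed.
Lemma sdeg4 : sdeg 4 = 2%N.
Proof. by have := sdeg_pow 2. Qed.

Lemma cs1 i : cs 1 i = ((0 == i) + (1 == i))%N.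
Proof.
rewrite /cs expn1 big_nat_recr // big_nat_recr // big_geq //.
by rewrite /= sdeg1 sdeg2.
Qed.

Lemma cs2 i : cs 2 i = ((0 == i) + (1 == i) + (1 == i) + (2 == i))%N.
Proof.
rewrite /cs (_ : 2 ^ 2 = 4)%N // !big_nat_recr // big_geq //.
by rewrite /= sdeg1 sdeg2 sdeg3 sdeg4.
Qed.

Lemma a21 : a 2 1 = 2.
Proof. by rewrite /a /= (_ : (2 ^ (2 - 1) * 'C(1, 2 - 1))%N = 2%N). Qed.

Lemma Fh11 : Fh 1 1 = 1.
Proof. rewrite /Fh /Ssum /b /a2 /= a_nn; try ring. Qed.
Lemma Fh21 : Fh 2 1 = 4.
Proof. rewrite /Fh /Ssum /b /a2 /= a21 a_nn; try ring. Qed.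
Lemma Fh22 : Fh 2 2 = 1.
Proof. rewrite /Fh /Ssum /b /a2 /= a21 !a_nn a_gt //; try ring. Qed.

Lemma Q n : (1 <= n)%N -> forall i, 2 * (cs n i)%:R = Fh n i + (i == n)%:R.
Proof.
elim: n {-2}n (leqnn n) => [|N IH] n hn h1; first by lia.
case: n hn h1 => [|[|[|n]]] hn h1 //.
- case=> [|[|k]].
  + by rewrite cs1 Fh0 // /=; ring.
  + by rewrite cs1 Fh11 /=; ring.
  + rewrite cs1 (_ : k.+2 = 1 + k.+1)%N // Fh_zero ?Fh11 //.
- case=> [|[|[|k]]].
  + by rewrite cs2 Fh0 // /=; ring.
  + by rewrite cs2 Fh21 /=; ring.
  + by rewrite cs2 Fh22 /=; ring.
  + rewrite cs2 (_ : k.+3 = 2 + k.+1)%N // Fh_zero ?Fh22 //.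
case=> [|i].
  rewrite cs_0 // Fh0 // /=; ring.
have hr0 := cs_rec n.+3 i ltac:(lia).
have hr : ((cs n.+3 i.+1 + (i == n.+3 - 2))%N%:R : rat) = ((cs n.+3.-1 i + 2 * cs (n.+3 - 2) i)%N)%:R by rewrite hr0.
rewrite !natrD in hr.
have h1' := IH n.+2 ltac:(lia) ltac:(lia) i.
have h2' := IH (n.+3 - 2)%N ltac:(lia) ltac:(lia) i.
rewrite Fh_rec //.
rewrite (_ : (i.+1 == n.+3) = (i == n.+3.-1)); last by [].
move: hr h1' h2'.
rewrite (_ : n.+3.-1 = n.+2) // (_ : (n.+3 - 2 = n.+1)%N) //.
lra.
Qed.



Definition g (n j : nat) : rat :=
  ((2 * n)%:R - (5 * j)%:R) / (j%:R * 6%:R ^+ j) * ('C(j, n - j))%:R.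

Lemma term n i : (i.+1 <= n - 1)%N -> b n i = 2 * 3%:R ^+ i.+1 * 2%:R ^+ n * g n i.+1.
Proof.
move=> hi.
have [k ->] : exists k, n = (i + k + 2)%N by exists (n - i - 2)%N; lia.
rewrite /b /a2 ifT; last lia.
rewrite /a !ifT; try lia.
rewrite (_ : (i + k + 2 - 2 - i = k)%N); last lia.
rewrite (_ : (i + k + 2 - i.+1 = k.+1)%N); last lia.
rewrite /g (_ : (i + k + 2 - i.+1 = k.+1)%N); last lia.
have hb := mul_bin_diag i.+1 k.
have hX : ('C(i, k))%:R = (k.+1)%:R * ('C(i.+1, k.+1))%:R / (i.+1)%:R :> rat.
  rewrite -natrM -hb /= natrM mulrC mulrA mulVf ?mul1r //.
  by rewrite pnatr_eq0.
rewrite !natrM hX !natrX.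
rewrite (_ : 6%:R = 2%:R * 3%:R :> rat); last by rewrite -natrM.
rewrite exprMn !exprD !exprS.
rewrite !natrD.
field.
by rewrite !expf_neq0 // addrC natr1 pnatr_eq0.
Qed.

Lemma g0 n : g n 0 = 0.
Proof. by rewrite /g mul0r invr0 mulr0 mul0r. Qed.

Lemma S_eq n i : (i <= n - 1)%N ->
  Ssum n i = 2 * 3%:R ^+ i * 2%:R ^+ n * \sum_(0 <= j < i.+1) g n j.
Proof.
elim: i => [|i IH] hi.
  by rewrite big_nat1 g0 mulr0.
rewrite SS IH; last lia.
rewrite term // [in RHS]big_nat_recr //= exprS; ring.
Qed.

Lemma sum_from n i : (1 <= n)%N ->
  \sum_(n - n./2 <= j < i.+1) g n j = \sum_(0 <= j < i.+1) g n j.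
Proof.
move=> hn.
have z : forall j, (j < n - n./2)%N -> g n j = 0.
  move=> j hj; rewrite /g bin_small ?mulr0 //.
  have := odd_double_half n; lia.
case: (leqP (n - n./2) i.+1) => h.
  rewrite [RHS](big_cat_nat (leq0n (n - n./2)) h) /=.
  rewrite (_ : \sum_(0 <= j < n - n./2) g n j = 0) ?add0r //.
  rewrite big_nat_cond big1 // => j /andP [/andP [_ hj] _]; apply: z; lia.
rewrite big_geq; last lia.
rewrite big_nat_cond big1 // => j /andP [/andP [_ hj] _]; apply: z; lia.
Qed.

Lemma cs_formula n i : (1 <= n)%N -> (i <= n - 1)%N ->
  (cs n i)%:R =
       (2%:R ^+ n * ('C(i, n - i))%:R) / 2%:R ^+ i.+1
       + 3%:R ^+ i * (1 + 2%:R ^+ n *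
           \sum_(n - n./2 <= j < i.+1)
              ((2 * n)%:R - (5 * j)%:R) / (j%:R * 6%:R ^+ j) * ('C(j, n - j))%:R)
       :> rat.
Proof.
move=> hn hi.
have hq := Q n hn i.
rewrite (_ : (i == n) = false) in hq; last lia.
have -> : (cs n i)%:R = Fh n i / 2 :> rat by move: hq; rewrite /= addr0 => <-; field.
rewrite (_ : \sum_(n - n./2 <= j < i.+1)
              ((2 * n)%:R - (5 * j)%:R) / (j%:R * 6%:R ^+ j) * ('C(j, n - j))%:R
           = \sum_(n - n./2 <= j < i.+1) g n j) //.
rewrite sum_from // /Fh S_eq // /a ifT; last lia.
rewrite natrM natrX.
have -> : (2%:R ^+ n : rat) = 2%:R ^+ (n - i) * 2%:R ^+ i.
  by rewrite -exprD subnK //; lia.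
rewrite exprS; field.
by rewrite expf_neq0.
Qed.

Lemma cs_big n i : (n < i)%N -> cs n i = 0%N.
Proof.
move=> h; rewrite /cs big_nat_cond big1 // => m /andP [/andP [_ hm] _].
have := sdeg_le n m.+1 (ltn0Sn m) hm.
by case: eqP => //; lia.
Qed.

Lemma cs_nn n : (1 <= n)%N -> cs n n = 1%N.
Proof.
elim: n {-2}n (leqnn n) => [|N IH] n hn h1; first by lia.
case: n hn h1 => [|[|n]] hn h1 //.
  by rewrite cs1.
have hs := cs_rec n.+2 n.+1 isT.
have e1 : cs n.+2.-1 n.+1 = 1%N by apply: IH; lia.
have e2 : cs (n.+2 - 2) n.+1 = 0%N by apply: cs_big; lia.
have e3 : (n.+1 == n.+2 - 2)%N = false by lia.
rewrite e1 e2 e3 in hs; lia.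
Qed.

Lemma sum_delta (d n : nat) : (d <= n)%N ->
  \sum_(0 <= i < n.+1) ((d == i) : nat)%:R *: ('X^i : {poly int}) = 'X^d.
Proof.
move=> hd; rewrite (bigD1_seq d) /=; last 2 first; [by rewrite mem_index_iota; lia | exact: (iota_uniq 0 n.+1) |].
rewrite eqxx scale1r big1 ?addr0 // => j hj.
by rewrite eq_sym (negbTE hj) scale0r.
Qed.

Lemma H_eq n : H n = \sum_(i < n.+1) (ecount i n)%:R *: 'X^i.
Proof.
rewrite /H big_add1 /= -(big_mkord xpredT (fun i => (ecount i n)%:R *: 'X^i)).
under [RHS]eq_bigr => i _ do rewrite ecountE /cs natr_sum scaler_suml.
rewrite exchange_big_nat; apply: eq_big_nat => m hm.
apply/esym/sum_delta/sdeg_le => //.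
Qed.



Theorem mainTheorem7 (n : nat) (hn : (1 <= n)%N) :
  H n = \sum_(i < n.+1) (ecount i n)%:R *: 'X^i /\
  (forall i : nat, (i <= n - n./2 - 1)%N -> ecount i n = (3 ^ i)%N) /\
  (forall i : nat, (n - n./2 <= i)%N -> (i <= n - 1)%N ->
     (ecount i n)%:R =
       (2%:R ^+ n * ('C(i, n - i))%:R) / 2%:R ^+ i.+1
       + 3%:R ^+ i * (1 + 2%:R ^+ n *
           \sum_(n - n./2 <= j < i.+1)
              ((2 * n)%:R - (5 * j)%:R) / (j%:R * 6%:R ^+ j) * ('C(j, n - j))%:R)
       :> rat) /\
  ecount n n = 1%N.
Proof.
split; first exact: H_eq.
split.
  move=> i hi.
  have hf := cs_formula n i hn ltac:(lia).
  rewrite -ecountE in hf.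
  rewrite big_geq in hf; last lia.
  rewrite bin_small in hf; last by have := odd_double_half n; lia.
  apply/eqP; rewrite -(eqr_nat rat) hf natrX; apply/eqP.
  ring.
split.
  by move=> i h1 h2; rewrite ecountE cs_formula.
by rewrite ecountE cs_nn.
Qed.
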